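(* Let $\Omega_1,\Omega_2\subset\mathbb{R}^n$ be nearly convex sets with $\operatorname{ri}\Omega_1\cap\operatorname{ri}\Omega_2\neq\emptyset$. Then $\sigma_{\Omega_1\cap\Omega_2}=\sigma_{\Omega_1}\,\square\,\sigma_{\Omega_2}$. Moreover, for every $v\in\mathbb{R}^n$ with $\sigma_{\Omega_1\cap\Omega_2}(v)\in\mathbb{R}$ there exist $v_1,v_2\in\mathbb{R}^n$ with $v=v_1+v_2$ and $\sigma_{\Omega_1\cap\Omega_2}(v)=\sigma_{\Omega_1}(v_1)+\sigma_{\Omega_2}(v_2)$.
   Context: A set $\Omega$ is nearly convex if there is a convex set $C$ with $C\subset\Omega\subset\overline{C}$; $\operatorname{ri}\Omega=\{a\in\Omega:\exists\delta>0,\ B(a;\delta)\cap\operatorname{aff}\Omega\subset\Omega\}$. Support function: $\sigma_\Omega(v)=\sup\{\langle v,x\rangle:x\in\Omega\}$. Infimal convolution: $(g\square h)(x)=\inf\{g(x_1)+h(x_2):x_1+x_2=x\}$. *)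

(* Defs.v *)
From HB Require Import structures.
From mathcomp Require Import all_boot all_order all_algebra.
From mathcomp Require Import all_classical all_reals all_analysis.
Set Implicit Arguments. Unset Strict Implicit. Unset Printing Implicit Defensive.
Import Order.TTheory GRing.Theory Num.Theory.
Local Open Scope classical_set_scope.
Local Open Scope ring_scope.

Section Defs.
Variables (R : realType) (n : nat).
Implicit Types (x y v a : 'rV[R]_n) (C Omega : set 'rV[R]_n).

Definition dotp (u v : 'rV[R]_n) : R := \sum_(i < n) u 0 i * v 0 i.

Definition eball a (delta : R) : set 'rV[R]_n :=
  [set x | Num.sqrt (dotp (x - a) (x - a)) < delta].

Definition convex_set_def C : Prop :=
  forall x y (t : R), C x -> C y -> 0 <= t <= 1 ->
    C (t *: x + (1 - t) *: y).

Definition eclosure C : set 'rV[R]_n :=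
  [set x | forall eps : R, 0 < eps -> exists c, C c /\ eball x eps c].

Definition nearly_convex Omega : Prop :=
  exists C, convex_set_def C /\ C `<=` Omega /\ Omega `<=` eclosure C.

Definition aff Omega : set 'rV[R]_n :=
  [set x | exists (k : nat) (lam : 'I_k -> R) (p : 'I_k -> 'rV[R]_n),
     (forall i, Omega (p i)) /\ \sum_(i < k) lam i = 1 /\
     x = \sum_(i < k) lam i *: p i].

Definition ri Omega : set 'rV[R]_n :=
  [set a | Omega a /\ exists delta : R, 0 < delta /\
     eball a delta `&` aff Omega `<=` Omega].

(* support function, sup of the empty set being -oo *)
Definition support_fun Omega (v : 'rV[R]_n) : \bar R :=
  ereal_sup [set (dotp v x)%:E | x in Omega].

Definition infconv (g h : 'rV[R]_n -> \bar R) (x : 'rV[R]_n) : \bar R :=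
  ereal_inf [set (g p.1 + h p.2)%E | p in [set p : 'rV[R]_n * 'rV[R]_n | p.1 + p.2 = x]].

End Defs.

(* Main.v *)
Require Import Defs.
From HB Require Import structures.
From mathcomp Require Import all_boot all_order all_algebra.
From mathcomp Require Import all_classical all_reals all_analysis.
From mathcomp Require Import ring lra.
Import Order.TTheory GRing.Theory Num.Theory.
Local Open Scope classical_set_scope.
Local Open Scope ring_scope.
Set Implicit Arguments. Unset Strict Implicit. Unset Printing Implicit Defensive.

Section Dot.
Variables (R : realType) (m : nat).
Implicit Types (u v w : 'rV[R]_m).

Lemma dotpDr u v w : dotp u (v + w) = dotp u v + dotp u w.
Proof. by rewrite /dotp -big_split; apply: eq_bigr => i _; rewrite mxE mulrDr. Qed.
Lemma dotpDl u v w : dotp (u + v) w = dotp u w + dotp v w.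
Proof. by rewrite /dotp -big_split; apply: eq_bigr => i _; rewrite mxE mulrDl. Qed.
Lemma dotpZr (a : R) u v : dotp u (a *: v) = a * dotp u v.
Proof. rewrite /dotp mulr_sumr; apply: eq_bigr => i _; rewrite mxE; ring. Qed.
Lemma dotpZl (a : R) u v : dotp (a *: u) v = a * dotp u v.
Proof. rewrite /dotp mulr_sumr; apply: eq_bigr => i _; rewrite mxE; ring. Qed.
Lemma dotpC u v : dotp u v = dotp v u.
Proof. by rewrite /dotp; apply: eq_bigr => i _; rewrite mulrC. Qed.
Lemma dotp0r u : dotp u 0 = 0.
Proof. by rewrite /dotp big1 // => i _; rewrite mxE mulr0. Qed.
Lemma dotp0l u : dotp 0 u = 0.
Proof. by rewrite dotpC dotp0r. Qed.
Lemma dotpNr u v : dotp u (- v) = - dotp u v.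
Proof. by rewrite -scaleN1r dotpZr mulN1r. Qed.
Lemma dotpNl u v : dotp (- u) v = - dotp u v.
Proof. by rewrite -scaleN1r dotpZl mulN1r. Qed.
Lemma dotpBr u v w : dotp u (v - w) = dotp u v - dotp u w.
Proof. by rewrite dotpDr dotpNr. Qed.
Lemma dotpBl u v w : dotp (u - v) w = dotp u w - dotp v w.
Proof. by rewrite dotpDl dotpNl. Qed.
Lemma dotp_ge0 u : 0 <= dotp u u.
Proof. by rewrite /dotp sumr_ge0 // => i _; rewrite -expr2 sqr_ge0. Qed.

Lemma coord_le u (i : 'I_m) : `|u 0 i| <= Num.sqrt (dotp u u).
Proof.
rewrite -sqrtr_sqr ler_sqrt ?dotp_ge0 // /dotp (bigD1 i) //= expr2 lerDl.
by rewrite sumr_ge0 // => j _; rewrite -expr2 sqr_ge0.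
Qed.

Lemma dotp_bound u v : dotp u v <= (\sum_i `|u 0 i|) * Num.sqrt (dotp v v).
Proof.
rewrite /dotp mulr_suml; apply: ler_sum => i _.
apply: (le_trans (ler_norm _)); rewrite normrM ler_wpM2l //.
exact: coord_le.
Qed.
End Dot.


Section HB.
Variables (R : realType) (m : nat) (D : set 'rV[R]_m) (p : 'rV[R]_m -> R).
Hypothesis D0 : D 0.
Hypothesis DD : forall x y, D x -> D y -> D (x + y).
Hypothesis DZ : forall (a : R) x, D x -> D (a *: x).
Hypothesis pD : forall x y, D x -> D y -> p (x + y) <= p x + p y.
Hypothesis pZ : forall (a : R) x, 0 < a -> D x -> p (a *: x) = a * p x.

Definition Dj (j : nat) := [set z | D z /\ forall i : 'I_m, (j <= i)%N -> z 0 i = 0].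

Lemma p0 : p 0 = 0.
Proof.
have := @pZ 2 0 (ltr0Sn R 1) D0; rewrite scaler0 => h.
lra.
Qed.

Lemma DN x : D x -> D (- x).
Proof. by move=> Dx; rewrite -scaleN1r; apply: DZ. Qed.

Lemma hb_j j : exists w, forall z, Dj j z -> dotp w z <= p z.
Proof.
elim: j => [|j [w IH]].
  exists 0 => z [Dz hz]; rewrite dotp0l.
  have -> : z = 0 by apply/matrixP => i k; rewrite ord1 mxE; apply: hz.
  by rewrite p0.
have [[d [[Dd hd] [J [hJ dJ]]]]|nod] := pselect (exists d, Dj j.+1 d /\
   exists J : 'I_m, nat_of_ord J = j /\ d 0 J != 0); last first.
  exists w => z [Dz hz]; apply: IH; split => // i ji.
  have [ij|ij] := eqVneq (nat_of_ord i) j.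
    have [//|zi] := eqVneq (z 0 i) 0; exfalso; apply: nod.
    by exists z; split; [split|exists i].
  by apply: hz; rewrite ltn_neqAle eq_sym ij.
pose A := [set dotp w y - p (y - d) | y in Dj j].
have Djj x : Dj j x -> D x by case.
have DjD x y : Dj j x -> Dj j y -> Dj j (x + y).
  by move=> [Dx hx] [Dy hy]; split; [exact: DD|move=> i ji; rewrite mxE hx // hy // addr0].
have DjZ (a : R) x : Dj j x -> Dj j (a *: x).
  by move=> [Dx hx]; split; [exact: DZ|move=> i ji; rewrite mxE hx // mulr0].
have Dj0 : Dj j 0 by split => // i _; rewrite mxE.
have key y y' : Dj j y -> Dj j y' -> dotp w y - p (y - d) <= p (y' + d) - dotp w y'.
  move=> hy hy'; rewrite lerBrDr addrAC lerBlDr.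
  apply: (le_trans (y := p (y + y'))).
    by rewrite -dotpDr; apply: IH; apply: DjD.
  have -> : y + y' = (y' + d) + (y - d) by rewrite addrACA subrr addr0 addrC.
  by apply: pD; [apply: DD; [exact: Djj|]|apply: DD; [exact: Djj|exact: DN]].
have A0 : A !=set0 by exists (dotp w 0 - p (0 - d)); exists 0.
have Aub y' : Dj j y' -> ubound A (p (y' + d) - dotp w y').
  by move=> hy' _ [y hy <-]; apply: key.
pose c := sup A.
have c_ge y : Dj j y -> dotp w y - p (y - d) <= c.
  move=> hy; apply: ub_le_sup; first by exists (p (0 + d) - dotp w 0); apply: Aub.
  by exists y.
have c_le y' : Dj j y' -> c <= p (y' + d) - dotp w y'.
  by move=> hy'; apply: ge_sup => //; apply: Aub.
pose delta : 'rV[R]_m := \row_i (i == J)%:R.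
have dotd u : dotp u delta = u 0 J.
  rewrite /dotp (bigD1 J) //= big1 ?addr0; first by rewrite mxE eqxx mulr1.
  by move=> i /negbTE iJ; rewrite mxE iJ mulr0.
pose th := (c - dotp w d) / d 0 J.
exists (w + th *: delta) => z [Dz hz].
have dw u : dotp (w + th *: delta) u = dotp w u + th * u 0 J.
  by rewrite dotpDl dotpZl (dotpC delta) dotd.
pose s := z 0 J / d 0 J.
pose y := z - s *: d.
have hy : Dj j y.
  split; first by apply: DD => //; apply: DN; apply: DZ.
  move=> i ji; rewrite !mxE.
  have [->|iJ] := eqVneq i J; first by rewrite /s divfK // subrr.
  have ji' : (j.+1 <= i)%N by rewrite ltn_neqAle ji andbT; apply: contra iJ => /eqP h; apply/eqP/val_inj; rewrite /= -h hJ.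
  by rewrite hz // hd // mulr0 subr0.
have yJ : y 0 J = 0 by case: hy => _ ->; rewrite // hJ.
have zE : z = y + s *: d by rewrite /y subrK.
have wdc : dotp (w + th *: delta) d = c by rewrite dw /th divfK // addrC subrK.
rewrite zE dotpDr dotpZr wdc dw yJ mulr0 addr0.
have [s0|s0|s0] := ltgtP s 0.
- have [sg sgE] : exists sg, sg = - s by eexists.
  have sg0 : 0 < sg by rewrite sgE oppr_gt0.
  have := c_ge (sg^-1 *: y) (DjZ _ _ hy).
  rewrite dotpZr -[y + s *: d](@scalerKV _ _ sg) ?gt_eqF //.
  rewrite pZ //; last by apply: DZ; apply: DD; [exact: Djj|exact: DZ].
  have -> : sg^-1 *: (y + s *: d) = sg^-1 *: y - d.
    rewrite scalerDr scalerA sgE invrN mulNr mulVf ?lt_eqF // scaleN1r.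
    done.
  move=> h.
  have := ler_wpM2l (ltW sg0) h; rewrite mulrBr mulrA mulfV ?gt_eqF // mul1r.
  have -> : s = - sg by rewrite sgE opprK.
  move=> h2; rewrite mulNr; lra.
- have := c_le (s^-1 *: y) (DjZ _ _ hy).
  rewrite dotpZr -[y + s *: d](@scalerKV _ _ s) ?gt_eqF //.
  rewrite pZ //; last by apply: DZ; apply: DD; [exact: Djj|exact: DZ].
  have -> : s^-1 *: (y + s *: d) = s^-1 *: y + d.
    by rewrite scalerDr scalerA mulVf ?gt_eqF // scale1r.
  move=> h.
  have := ler_wpM2l (ltW s0) h; rewrite mulrBr mulrA mulfV ?gt_eqF // mul1r.
  move=> h2; lra.
- by rewrite s0 mul0r addr0 scale0r addr0; apply: IH.
Qed.

Lemma hahn_banach : exists w, forall z, D z -> dotp w z <= p z.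
Proof.
have [w hw] := hb_j m; exists w => z Dz; apply: hw; split => // i mi.
by have := ltn_ord i; rewrite ltnNge mi.
Qed.
End HB.


Section Cone.
Variables (R : realType) (m : nat) (K : set 'rV[R]_m).
Hypothesis KD : forall x y, K x -> K y -> K (x + y).
Hypothesis KZ : forall (a : R) x, 0 < a -> K x -> K (a *: x).

Lemma Ksum r (M : 'M[R]_(r, m)) (c : 'I_r -> R) x :
  (forall i, K (row i M)) -> (forall i, 0 < c i) -> K x ->
  K (x + \sum_i c i *: row i M).
Proof.
move=> hM hc Kx; apply: (big_rec (fun y => K (x + y))); first by rewrite addr0.
by move=> i y _ Ky; rewrite addrCA; apply: KD => //; apply: KZ.
Qed.

Lemma core k0 : K k0 -> exists e, K e /\
  forall k, K k -> exists t, 0 < t /\ K (t *: e - k).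
Proof.
move=> Kk0.
pose P := fun j => `[< exists r (M : 'M[R]_(r, m)), (forall i, K (row i M)) /\ \rank M = j >].
have exP : exists j, P j.
  exists 0%N; apply/asboolP; exists 0%N, 0; split; first by case.
  by rewrite mxrank0.
have ubP j : P j -> (j <= m)%N.
  by move=> /asboolP [r [M [_ <-]]]; apply: rank_leq_col.
case: (ex_maxnP exP ubP) => j /asboolP [r [M [hM rM]]] jmax.
have span k : K k -> (k <= M)%MS.
  move=> Kk; apply/negPn/negP => nk.
  have : P (\rank (col_mx M k)).
    apply/asboolP; exists (r + 1)%N, (col_mx M k); split => // i.
    rewrite -(fintype.splitK i); case: (fintype.split i) => [a|b] /=; first by rewrite rowKu.
    by rewrite rowKd (_ : row b k = k) //; apply/matrixP => a c; rewrite !mxE !ord1.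
  move/jmax; apply/negP; rewrite -ltnNge -rM.
  rewrite -(eqmx_rank (introT eqmxP (addsmxE M k))).
  have := mxrank_leqif_sup (addsmxSl M k).
  by move=> [le eqC]; rewrite ltn_neqAle le andbT eqC addsmx_sub submx_refl /= nk.
exists (k0 + \sum_i 1 *: row i M); split.
  by apply: Ksum => // i; apply: ltr01.
move=> k Kk; have /submxP [u ->] := span k Kk.
pose t := 1 + \sum_i `|u 0 i|.
have t0 : 0 < t by rewrite ltr_pwDl // sumr_ge0.
have ut i : 0 < t - u 0 i.
  rewrite subr_gt0 /t; apply: (le_lt_trans (ler_norm _)).
  rewrite ltr_pwDl // (bigD1 i) //= lerDl sumr_ge0 //.
exists t; split => //.
have -> : t *: (k0 + \sum_i 1 *: row i M) - u *m M =
   t *: k0 + \sum_i (t - u 0 i) *: row i M.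
  rewrite mulmx_sum_row scalerDr scaler_sumr -addrA -sumrB; congr (_ + _).
  by apply: eq_bigr => i _; rewrite scale1r scalerBl.
by apply: Ksum => //; apply: KZ.
Qed.

Lemma cone_sep k0 : K k0 -> ~ K (- k0) ->
  exists w, (forall k, K k -> dotp w k <= 0) /\ exists k1, K k1 /\ dotp w k1 < 0.
Proof.
move=> Kk0 nKk0.
have [e [Ke ecore]] := core Kk0.
have nKe : ~ K (- e).
  move=> Kne; apply: nKk0; have [t [t0 Kt]] := ecore _ Kk0.
  have -> : - k0 = (t *: e - k0) + t *: (- e) by rewrite scalerN addrAC subrr add0r.
  by apply: KD => //; apply: KZ.
have Kpos u : K (u *: e) -> 0 <= u.
  move=> Ku; rewrite leNgt; apply/negP => u0; apply: nKe.
  have -> : - e = (- u)^-1 *: (u *: e).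
    by rewrite scalerA invrN mulNr mulVf ?lt_eqF // scaleN1r.
  by apply: KZ => //; rewrite invr_gt0 oppr_gt0.
pose T z := [set t : R | K (t *: e - z)].
pose D := [set z | (exists t1, K (t1 *: e - z)) /\ (exists t2, K (t2 *: e + z))].
pose q z := inf (T z).
have Tlb z t2 : K (t2 *: e + z) -> lbound (T z) (- t2).
  move=> K2 t Kt; rewrite -subr_ge0 opprK; apply: Kpos.
  have -> : (t + t2) *: e = (t *: e - z) + (t2 *: e + z).
    by rewrite scalerDl addrACA addNr addr0.
  by apply: KD.
have qle z t : D z -> T z t -> q z <= t.
  move=> [_ [t2 K2]] Tt; apply: ge_inf => //; by exists (- t2); apply: Tlb.
have qge z x : D z -> (forall t, T z t -> x <= t) -> x <= q z.
  by move=> [[t1 K1] _] h; apply: lb_le_inf => //; exists t1.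
have D0 : D 0 by split; exists 1; rewrite scale1r ?subr0 ?addr0.
have DD x y : D x -> D y -> D (x + y).
  move=> [[a1 h1] [a2 h2]] [[b1 g1] [b2 g2]]; split.
    exists (a1 + b1); rewrite scalerDl opprD addrACA; exact: KD.
  exists (a2 + b2); rewrite scalerDl addrACA; exact: KD.
have DZ (a : R) x : D x -> D (a *: x).
  move=> [[a1 h1] [a2 h2]].
  have [a0|a0|->] := ltgtP a 0; last by rewrite scale0r.
  - split; [exists ((- a) * a2)|exists ((- a) * a1)].
      have -> : ((- a) * a2) *: e - a *: x = (- a) *: (a2 *: e + x).
        by rewrite scalerDr scalerA scaleNr.
      by apply: KZ; rewrite ?oppr_gt0.
    have -> : ((- a) * a1) *: e + a *: x = (- a) *: (a1 *: e - x).
      by rewrite scalerBr scalerA scaleNr opprK.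
    by apply: KZ; rewrite ?oppr_gt0.
  - split; [exists (a * a1)|exists (a * a2)]; rewrite -scalerA -?scalerBr -?scalerDr; exact: KZ.
have qD x y : D x -> D y -> q (x + y) <= q x + q y.
  move=> Dx Dy.
  have h1 t1 t2 : T x t1 -> T y t2 -> q (x + y) <= t1 + t2.
    move=> T1 T2; apply: qle; first exact: DD.
    by rewrite /T /= scalerDl opprD addrACA; apply: KD.
  have h3 t1 : T x t1 -> q (x + y) - t1 <= q y.
    move=> T1; apply: qge => // t2 T2; have := h1 _ _ T1 T2; lra.
  have : q (x + y) - q y <= q x.
    apply: qge => // t1 T1; have := h3 _ T1; lra.
  lra.
have qZ (a : R) x : 0 < a -> D x -> q (a *: x) = a * q x.
  move=> a0 Dx; apply/eqP; rewrite eq_le; apply/andP; split.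
    have h1 : q (a *: x) / a <= q x.
      apply: qge => // t Tt; rewrite ler_pdivrMr // mulrC; apply: qle; first exact: DZ.
      by rewrite /T /= -scalerA -scalerBr; apply: KZ.
    by have := ler_wpM2r (ltW a0) h1; rewrite divfK ?gt_eqF // mulrC.
  apply: qge; first exact: DZ.
  move=> t Tt.
  have Tt' : T x (a^-1 * t).
    rewrite /T /=.
    have -> : (a^-1 * t) *: e - x = a^-1 *: (t *: e - a *: x).
      by rewrite scalerBr scalerA scalerA mulVf ?gt_eqF // scale1r.
    by apply: KZ => //; rewrite invr_gt0.
  have := qle _ _ Dx Tt'.
  by move/(ler_wpM2l (ltW a0)); rewrite mulrA mulfV ?gt_eqF // mul1r.
have [f hf] := @hahn_banach _ _ D q D0 DD DZ qD qZ.
have KinD k : K k -> D k.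
  move=> Kk; split; first by have [t [_ ?]] := ecore _ Kk; exists t.
  by exists 1; rewrite scale1r; apply: KD.
have qneg k : K k -> q (- k) <= 0.
  move=> Kk; rewrite leNgt; apply/negP => q0.
  have : q (- k) <= q (- k) / 2.
    apply: qle; first by rewrite -scaleN1r; apply: DZ; apply: KinD.
    by rewrite /T /= opprK; apply: KD => //; apply: KZ => //; rewrite divr_gt0.
  lra.
exists (- f); split.
  move=> k Kk; rewrite dotpNl -dotpNr.
  apply: le_trans (qneg _ Kk); apply: hf; rewrite -scaleN1r; apply: DZ; exact: KinD.
exists e; split => //; rewrite dotpNl -dotpNr.
apply: (@le_lt_trans _ _ (q (- e))); first by apply: hf; rewrite -scaleN1r; apply: DZ; exact: KinD.
apply: (@le_lt_trans _ _ (- (1/2))); last by lra.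
apply: qle; first by rewrite -scaleN1r; apply: DZ; exact: KinD.
rewrite /T /= opprK (_ : - (1/2) *: e + e = (1/2) *: e); last first.
  by rewrite -[X in _ + X]scale1r -scalerDl; congr (_ *: _); lra.
by apply: KZ => //; lra.
Qed.
End Cone.


Section Geo.
Variables (R : realType) (n : nat).
Implicit Types (C Om : set 'rV[R]_n).

Lemma dotpNN (u : 'rV[R]_n) : dotp (- u) (- u) = dotp u u.
Proof. by rewrite dotpNl dotpNr opprK. Qed.

Lemma clos_bound C (u : 'rV[R]_n) b : (forall c, C c -> dotp u c <= b) ->
  forall x, eclosure C x -> dotp u x <= b.
Proof.
move=> hC x hx; rewrite leNgt; apply/negP => bx.
pose S := \sum_i `|u 0 i|.
have S0 : 0 <= S by rewrite sumr_ge0.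
pose eps := (dotp u x - b) / (S + 1).
have eps0 : 0 < eps by rewrite divr_gt0 ?subr_gt0 // ltr_pwDr.
have epsE : S * eps + eps = dotp u x - b.
  by rewrite -[X in _ + X]mul1r -mulrDl mulrC /eps divfK // gt_eqF // ltr_pwDr.
have [c [Cc hc]] := hx eps eps0.
move: hc; rewrite /eball /= => hc.
have h1 := dotp_bound u (x - c).
rewrite -(dotpNN (x - c)) opprB in h1.
have h4 : S * Num.sqrt (dotp (c - x) (c - x)) <= S * eps by rewrite ler_wpM2l // ltW.
have := hC c Cc; rewrite dotpBr -/S in h1; lra.
Qed.

Lemma ri_max Om a (w : 'rV[R]_n) : ri Om a -> (forall x, Om x -> dotp w x <= dotp w a) ->
  forall x, Om x -> dotp w x = dotp w a.
Proof.
move=> [Oa [del [del0 hdel]]] hmax x Ox; apply/eqP; rewrite eq_le hmax //=.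
pose d := a - x.
pose s := Num.sqrt (dotp d d).
have s0 : 0 <= s by apply: sqrtr_ge0.
pose e := del / (s + 1).
have e0 : 0 < e by rewrite divr_gt0 // ltr_pwDr.
have es : e * s < del.
  rewrite /e mulrAC ltr_pdivrMr ?ltr_pwDr // mulrDr mulr1 ltr_pwDr //.
pose p := a + e *: d.
have Op : Om p.
  apply: hdel; split.
    rewrite /eball /= /p addrC addKr dotpZl dotpZr mulrA -expr2 sqrtrM ?sqr_ge0 //.
    by rewrite sqrtr_sqr ger0_norm ?ltW.
  exists 2%N, (fun i : 'I_2 => if i == ord0 then 1 + e else - e),
              (fun i : 'I_2 => if i == ord0 then a else x).
  split; first by move=> i; case: ifP.
  rewrite !big_ord_recl !big_ord0 /=; split; first by rewrite addr0 addrK.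
  rewrite addr0 /p /d scalerBr scalerDl scale1r scaleNr addrA.
  by [].
have := hmax _ Op; rewrite /p dotpDr dotpZr -lerBrDl subrr pmulr_rle0 //.
by rewrite /d dotpBr subr_le0.
Qed.
End Geo.


Section Emb.
Variables (R : realType) (n : nat).
Definition emb (z : 'rV[R]_n) (t : R) : 'rV[R]_(n + 1) := row_mx z (\row_(i < 1) t).

Lemma dotp_row (w1 z1 : 'rV[R]_n) (w2 z2 : 'rV[R]_1) :
  dotp (row_mx w1 w2) (row_mx z1 z2) = dotp w1 z1 + w2 0 0 * z2 0 0.
Proof.
rewrite /dotp big_split_ord /= big_ord1; congr (_ + _).
  by apply: eq_bigr => i _; rewrite !row_mxEl.
by rewrite !row_mxEr.
Qed.

Lemma dotp_emb (W : 'rV[R]_(n + 1)) z t :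
  dotp W (emb z t) = dotp (lsubmx W) z + rsubmx W 0 0 * t.
Proof. by rewrite -{1}(hsubmxK W) /emb dotp_row mxE. Qed.

Lemma emb_add z1 t1 z2 t2 : emb z1 t1 + emb z2 t2 = emb (z1 + z2) (t1 + t2).
Proof. by rewrite /emb add_row_mx; congr row_mx; apply/matrixP => i j; rewrite !mxE. Qed.

Lemma emb_scale (a : R) z t : a *: emb z t = emb (a *: z) (a * t).
Proof. by rewrite /emb scale_row_mx; congr row_mx; apply/matrixP => i j; rewrite !mxE. Qed.

Lemma emb_opp z t : - emb z t = emb (- z) (- t).
Proof. by rewrite /emb opp_row_mx; congr row_mx; apply/matrixP => i j; rewrite !mxE. Qed.

Lemma emb_inj z1 t1 z2 t2 : emb z1 t1 = emb z2 t2 -> z1 = z2 /\ t1 = t2.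
Proof.
move/eq_row_mx => [-> h]; split => //.
by have := congr1 (fun M : 'rV[R]_1 => M 0 0) h; rewrite /= !mxE.
Qed.
End Emb.

Ltac sp4 := split; [|split; [|split; [|split]]].

Section Key.
Variables (R : realType) (n : nat) (Om1 Om2 C1 C2 : set 'rV[R]_n) (a v : 'rV[R]_n) (al : R).
Hypotheses (cv1 : convex_set_def C1) (cv2 : convex_set_def C2).
Hypotheses (s1 : C1 `<=` Om1) (s2 : C2 `<=` Om2).
Hypotheses (c1 : Om1 `<=` eclosure C1) (c2 : Om2 `<=` eclosure C2).
Hypotheses (r1 : ri Om1 a) (r2 : ri Om2 a).
Hypothesis hal : forall x, Om1 x -> Om2 x -> dotp v x <= al.

Lemma key : exists v1 v2, v = v1 + v2 /\
  forall x y, Om1 x -> Om2 y -> dotp v1 x + dotp v2 y <= al.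
Proof.
have Oa1 : Om1 a by case: r1.
have Oa2 : Om2 a by case: r2.
have [x0 [Cx0 _]] := c1 Oa1 ltr01.
have [y0 [Cy0 _]] := c2 Oa2 ltr01.
pose K := [set k | exists l r x y, 0 <= l /\ 0 <= r /\ C1 x /\ C2 y /\
   k = emb (l *: (x - y)) (l * (dotp v x - al) - r)].
have KD k1 k2 : K k1 -> K k2 -> K (k1 + k2).
  move=> [l1 [r1' [x1 [y1 [l10 [r10 [Cx1 [Cy1 ->]]]]]]]].
  move=> [l2 [r2' [x2 [y2 [l20 [r20 [Cx2 [Cy2 ->]]]]]]]].
  rewrite emb_add.
  have [L0|L0] := eqVneq (l1 + l2) 0.
    have l1z : l1 = 0 by lra.
    have l2z : l2 = 0 by lra.
    exists 0, (r1' + r2'), x1, y1; split => //; split; first exact: addr_ge0. do 2!split => //.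
    by rewrite l1z l2z !scale0r !mul0r addr0 !sub0r opprD.
  have Lp : 0 < l1 + l2 by rewrite lt_neqAle eq_sym L0 addr_ge0.
  have [t tE] : exists t, t = l1 / (l1 + l2) by eexists.
  have t01 : 0 <= t <= 1.
    by rewrite tE divr_ge0 ?addr_ge0 //= ler_pdivrMr // mul1r lerDl.
  have l1E : l1 = (l1 + l2) * t by rewrite tE mulrC divfK.
  have l2E : l2 = (l1 + l2) * (1 - t) by rewrite mulrBr mulr1 -l1E; lra.
  exists (l1 + l2), (r1' + r2'), (t *: x1 + (1 - t) *: x2), (t *: y1 + (1 - t) *: y2).
  sp4; [exact: ltW|exact: addr_ge0|exact: cv1|exact: cv2|].
  congr emb.
    have -> : t *: x1 + (1 - t) *: x2 - (t *: y1 + (1 - t) *: y2) =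
        t *: (x1 - y1) + (1 - t) *: (x2 - y2).
      by apply/matrixP => i j; rewrite !mxE; ring.
    by rewrite [in RHS]scalerDr !scalerA -l1E -l2E.
  rewrite dotpDr !dotpZr.
  have h : l1 * dotp v x1 + l2 * dotp v x2 =
      (l1 + l2) * (t * dotp v x1 + (1 - t) * dotp v x2).
    by rewrite mulrDr !mulrA -l1E -l2E.
  rewrite (_ : l1 * (dotp v x1 - al) - r1' + (l2 * (dotp v x2 - al) - r2') =
     (l1 * dotp v x1 + l2 * dotp v x2) - (l1 + l2) * al - (r1' + r2')); last by ring.
  by rewrite h; ring.
have KZ (c : R) k : 0 < c -> K k -> K (c *: k).
  move=> c0 [l [r [x [y [l0 [r0 [Cx [Cy ->]]]]]]]].
  exists (c * l), (c * r), x, y; sp4; try done; try (apply: mulr_ge0; by [|apply: ltW]).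
  by rewrite emb_scale scalerA; congr emb; ring.
pose k0 := emb 0 (-1) : 'rV[R]_(n + 1).
have Kk0 : K k0.
  exists 0, 1, x0, y0; sp4; try done.
  by rewrite /k0 scale0r mul0r sub0r.
have nKk0 : ~ K (- k0).
  move=> [l [r [x [y [l0 [r0 [Cx [Cy]]]]]]]].
  rewrite /k0 emb_opp oppr0 opprK => /emb_inj [h1 h2].
  have [lz|lnz] := eqVneq l 0.
    by move: h2; rewrite lz mul0r; lra.
  move: h1 => /esym/eqP; rewrite scaler_eq0 (negbTE lnz) /= subr_eq0 => /eqP xy.
  move: Cy; rewrite -xy => Cy; have := hal (s1 Cx) (s2 Cy).
  have : 0 <= l := l0.
  move: h2; nra.
have [W [hW [k1 [Kk1 hk1]]]] := cone_sep KD KZ Kk0 nKk0.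
pose w := lsubmx W.
pose g := rsubmx W 0 0.
have g0 : 0 <= g.
  have := hW _ Kk0; rewrite /k0 dotp_emb dotp0r add0r -/g; lra.
have hii x y : C1 x -> C2 y -> dotp w (x - y) + g * (dotp v x - al) <= 0.
  move=> Cx Cy.
  have Kk : K (emb (x - y) (dotp v x - al)).
    exists 1, 0, x, y; sp4; try done.
    by rewrite scale1r mul1r subr0.
  by have := hW _ Kk; rewrite dotp_emb.
have gp : 0 < g.
  rewrite lt_neqAle g0 andbT; apply/negP => /eqP g0'.
  have hC x y : C1 x -> C2 y -> dotp w x <= dotp w y.
    by move=> Cx Cy; have := hii x y Cx Cy; rewrite -g0' mul0r addr0 dotpBr subr_le0.
  have hO x y : Om1 x -> Om2 y -> dotp w x <= dotp w y.
    move=> Ox Oy.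
    have hx y' : C2 y' -> dotp w x <= dotp w y'.
      by move=> Cy'; apply: (clos_bound (C := C1)) (c1 Ox) => c Cc; apply: hC.
    have := clos_bound (C := C2) (u := - w) (b := - dotp w x) _ (c2 Oy).
    by rewrite dotpNl lerN2; apply => c Cc; rewrite dotpNl lerN2; apply: hx.
  have e1 := ri_max r1 (fun x Ox => hO x a Ox Oa2).
  have e2 := ri_max (w := - w) r2 (fun y Oy => ltac:(rewrite !dotpNl lerN2; exact: hO a y Oa1 Oy)).
  move: Kk1 hk1 => [l [r [x [y [l0 [r0 [Cx [Cy ->]]]]]]]].
  rewrite dotp_emb -/w -/g -g0' mul0r addr0 dotpZr dotpBr (e1 _ (s1 Cx)).
  have := e2 _ (s2 Cy); rewrite !dotpNl => /oppr_inj ->.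
  by rewrite subrr mulr0 ltxx.
exists (v + g^-1 *: w), (- (g^-1 *: w)); split; first by rewrite addrK.
have hC x y : C1 x -> C2 y -> dotp (v + g^-1 *: w) x + dotp (- (g^-1 *: w)) y <= al.
  move=> Cx Cy; have := hii x y Cx Cy.
  have gi : 0 <= g^-1 by rewrite invr_ge0 ltW.
  move/(ler_wpM2l gi); rewrite mulr0 mulrDr mulrA mulVf ?gt_eqF // mul1r.
  rewrite dotpDl dotpNl !dotpZl dotpBr; lra.
move=> x y Ox Oy.
have hx y' : C2 y' -> dotp (v + g^-1 *: w) x <= al - dotp (- (g^-1 *: w)) y'.
  move=> Cy'; apply: (clos_bound (C := C1)) (c1 Ox) => c Cc.
  by have := hC c y' Cc Cy'; lra.
have := clos_bound (C := C2) (u := - (g^-1 *: w)) (b := al - dotp (v + g^-1 *: w) x) _ (c2 Oy).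
by move=> h; have := h (fun c Cc => ltac:(have := hx c Cc; lra)); lra.
Qed.
End Key.


Section Fin.
Variables (R : realType) (n : nat).
Implicit Types (Om : set 'rV[R]_n).

Lemma sup_ge Om (u x : 'rV[R]_n) : Om x -> ((dotp u x)%:E <= support_fun Om u)%E.
Proof. by move=> Ox; apply: ereal_sup_ubound; exists x. Qed.

Lemma easy_ineq Om1 Om2 (v1 v2 : 'rV[R]_n) :
  (support_fun (Om1 `&` Om2) (v1 + v2) <= support_fun Om1 v1 + support_fun Om2 v2)%E.
Proof.
apply: ge_ereal_sup => y [x Ox <-]; case: Ox => O1 O2.
by rewrite dotpDl EFinD; apply: leeD; apply: sup_ge.
Qed.

Lemma hard_ineq Om1 Om2 (a v1 v2 : 'rV[R]_n) (al : R) : Om1 a -> Om2 a ->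
  (forall x y, Om1 x -> Om2 y -> dotp v1 x + dotp v2 y <= al) ->
  (support_fun Om1 v1 + support_fun Om2 v2 <= al%:E)%E.
Proof.
move=> O1 O2 h.
have ub1 y : Om2 y -> (support_fun Om1 v1 <= (al - dotp v2 y)%:E)%E.
  move=> Oy; apply: ge_ereal_sup => _ [x Ox <-]; rewrite lee_fin.
  by have := h x y Ox Oy; lra.
have [s1 s1E] : exists s1, support_fun Om1 v1 = s1%:E.
  have := ub1 _ O2; have := sup_ge v1 O1.
  by case: (support_fun Om1 v1) => [r||] //; exists r.
have ub2 : (support_fun Om2 v2 <= (al - s1)%:E)%E.
  apply: ge_ereal_sup => _ [y Oy <-]; rewrite lee_fin.
  by have := ub1 y Oy; rewrite s1E lee_fin; lra.
rewrite s1E; have := ub2.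
case: (support_fun Om2 v2) => [r||] //.
  move=> hr; rewrite lee_fin in hr.
  apply: (@le_trans _ _ (s1%:E + (al - s1)%:E)%E).
    by apply: leeD => //; rewrite lee_fin.
  by rewrite -EFinD lee_fin; lra.
by move=> _; rewrite addeNy leNye.
Qed.
End Fin.

Theorem theorem6p1 (R : realType) (n : nat) (Omega1 Omega2 : set 'rV[R]_n) :
  nearly_convex Omega1 -> nearly_convex Omega2 ->
  ri Omega1 `&` ri Omega2 !=set0 ->
  (support_fun (Omega1 `&` Omega2) = infconv (support_fun Omega1) (support_fun Omega2)) /\
  (forall v : 'rV[R]_n, support_fun (Omega1 `&` Omega2) v \is a fin_num ->
     exists v1 v2 : 'rV[R]_n, v = v1 + v2 /\
       support_fun (Omega1 `&` Omega2) v =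
         (support_fun Omega1 v1 + support_fun Omega2 v2)%E).
Proof.
move=> [C1 [cv1 [s1 c1]]] [C2 [cv2 [s2 c2]]] [a [r1 r2]].
have O1 : Omega1 a by case: r1.
have O2 : Omega2 a by case: r2.
have fin v al : support_fun (Omega1 `&` Omega2) v = al%:E ->
    exists v1 v2, v = v1 + v2 /\
      (support_fun Omega1 v1 + support_fun Omega2 v2 <= al%:E)%E.
  move=> hal.
  have hx x : Omega1 x -> Omega2 x -> dotp v x <= al.
    by move=> Ox1 Ox2; have := sup_ge v (conj Ox1 Ox2 : (Omega1 `&` Omega2) x); rewrite hal lee_fin.
  have [v1 [v2 [vE h]]] := key cv1 cv2 s1 s2 c1 c2 r1 r2 hx.
  by exists v1, v2; split => //; apply: (hard_ineq O1 O2 h).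
split.
  apply/funext => v; apply/eqP; rewrite eq_le; apply/andP; split.
    apply: le_ereal_inf_tmp => _ [[v1 v2] /= hv <-].
    by rewrite -hv; apply: easy_ineq.
  have := sup_ge v (conj O1 O2 : (Omega1 `&` Omega2) a).
  case E : (support_fun (Omega1 `&` Omega2) v) => [al||] // _; last by rewrite leey.
  have [v1 [v2 [vE h]]] := fin v al E.
  apply: ge_ereal_inf; exists (support_fun Omega1 v1 + support_fun Omega2 v2)%E => //.
  by exists (v1, v2).
move=> v /fineK E.
have [v1 [v2 [vE h]]] := fin v _ (esym E).
exists v1, v2; split => //; apply/eqP; rewrite eq_le; apply/andP; split.
  by rewrite vE easy_ineq.
by rewrite -E.
Qed.
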